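(* Let $f$ and $g$ be ternary cubic forms such that $J^3[f,g,u_x^3]=0$ identically in $u$. (1) If $f_{333}\neq0$, then $g=0$ if and only if $g_{113}=g_{123}=g_{223}=g_{133}=g_{233}=g_{333}=0$. (2) If $f_{333}\neq0$ and $4f_{113}f_{223}-f_{123}^2\neq0$, then $g=0$ if and only if $g_{113}=g_{123}=g_{223}=g_{333}=0$.
   Context: A ternary cubic form is written $f=\sum_{1\le i\le j\le k\le3}f_{ijk}x_ix_jx_k$, so $f_{ijk}$ ($i\le j\le k$) is the coefficient of the monomial $x_ix_jx_k$; the same convention applies to $g_{ijk}$. The variables $u=(u_1,u_2,u_3)$ are indeterminates and $u_x=\sum u_ix_i$. The third transvectant is $J^3[f,g,h]=\big(\Omega^3(f(x)g(y)h(z))\big)|_{y=z=x}$, where $\Omega$ is the determinant of the operator matrix with rows $(\partial/\partial x_i)$, $(\partial/\partial y_i)$, $(\partial/\partial z_i)$, and $u$ is treated as constant. *)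

(* Defs.v *)
From HB Require Import structures.
From mathcomp Require Import all_boot all_order all_algebra all_fingroup.
From mathcomp Require Export mpoly.
Set Implicit Arguments. Unset Strict Implicit. Unset Printing Implicit Defensive.
Import GRing.Theory.
Local Open Scope ring_scope.

(* Indices 0,1,2 : 'I_3 stand for the paper's indices 1,2,3. *)
Definition o1 : 'I_3 := @Ordinal 3 0 erefl.
Definition o2 : 'I_3 := @Ordinal 3 1 erefl.
Definition o3 : 'I_3 := @Ordinal 3 2 erefl.

(* Working ring: polynomials in 12 variables
   x_1..x_3 (indices 0..2), y_1..y_3 (3..5), z_1..z_3 (6..8), u_1..u_3 (9..11). *)
Definition xv (i : 'I_3) : 'I_12 := inord i.
Definition yv (i : 'I_3) : 'I_12 := inord (3 + i).
Definition zv (i : 'I_3) : 'I_12 := inord (6 + i).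
Definition uv (i : 'I_3) : 'I_12 := inord (9 + i).

Section Transvectant.
Variable R : ringType.

Definition rename (s : 'I_12 -> 'I_12) (p : {mpoly R[12]}) : {mpoly R[12]} :=
  p \mPo [tuple 'X_(s k) | k < 12].

Definition x_to_y (k : 'I_12) : 'I_12 := if (k < 3)%N then inord (k + 3) else k.
Definition x_to_z (k : 'I_12) : 'I_12 := if (k < 3)%N then inord (k + 6) else k.
Definition yz_to_x (k : 'I_12) : 'I_12 :=
  if (3 <= k < 9)%N then inord (k %% 3) else k.

(* Cayley's Omega process: determinant of the operator matrix with rows
   (d/dx_i), (d/dy_i), (d/dz_i). *)
Definition Omega (p : {mpoly R[12]}) : {mpoly R[12]} :=
  \sum_(s : 'S_3) (-1) ^+ s *:
     mderiv (xv (s o1)) (mderiv (yv (s o2)) (mderiv (zv (s o3)) p)).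

(* Third transvectant J^3[F,G,H] = (Omega^3 (F(x) G(y) H(z)))|_{y=z=x},
   where F, G, H are given as polynomials in the x-variables (coefficients
   possibly involving u, which is treated as constant). *)
Definition J3 (F G H : {mpoly R[12]}) : {mpoly R[12]} :=
  rename yz_to_x (iter 3 Omega (F * rename x_to_y G * rename x_to_z H)).

Definition lift_x (f : {mpoly R[3]}) : {mpoly R[12]} :=
  f \mPo [tuple 'X_(xv i) | i < 3].

Definition u_x : {mpoly R[12]} := \sum_(i < 3) 'X_(uv i) * 'X_(xv i).

(* f_{ijk} : coefficient of the monomial x_i x_j x_k *)
Definition cf (f : {mpoly R[3]}) (i j k : 'I_3) : R :=
  f@_(U_(i) + U_(j) + U_(k))%MM.

End Transvectant.

(* Main.v *)
Require Import Defs.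
From HB Require Import structures.
From mathcomp Require Import all_boot all_order all_algebra all_fingroup.
From mathcomp Require Import mpoly.
From mathcomp Require Import ring zify.
Import GRing.Theory Num.Theory.
Local Open Scope ring_scope.

Lemma sum_delta (R : comRingType) n (x : 'I_n) (G : 'I_n -> R) :
  \sum_(i < n) (x == i)%:R * G i = G x.
Proof.
rewrite (bigD1 x) //= eqxx mul1r big1 ?addr0 // => i Hi.
by rewrite eq_sym (negbTE Hi) mul0r.
Qed.

Lemma mderivXU (R : comRingType) n (i k : 'I_n) :
  ('X_i : {mpoly R[n]})^`M(k) = ((i == k)%:R)%:MP.
Proof.
rewrite mderivX mnm1E; case: eqP => [->|_].
  have -> : (U_(k) - U_(k))%MM = 0%MM by apply/mnmP=> l; rewrite mnmBE mnm0E subnn.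
  by rewrite mpolyX0 scale1r mpolyC1.
by rewrite scale0r mpolyC0.
Qed.

Lemma mderiv_comp (R : comRingType) n k (p : {mpoly R[n]}) (lq : n.-tuple {mpoly R[k]}) (j : 'I_k) :
  (p \mPo lq)^`M(j) = \sum_(i < n) (p^`M(i) \mPo lq) * (tnth lq i)^`M(j).
Proof.
pose Q (p : {mpoly R[n]}) :=
  (p \mPo lq)^`M(j) = \sum_(i < n) (p^`M(i) \mPo lq) * (tnth lq i)^`M(j).
have QM : forall p q, Q p -> Q q -> Q (p * q).
  move=> p1 q1 H1 H2; rewrite /Q rmorphM /= mderivM H1 H2.
  rewrite mulr_suml mulr_sumr -big_split /=; apply: eq_bigr => i _.
  rewrite mderivM rmorphD /= !rmorphM /=; ring.
have Q1 : Q 1.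
  rewrite /Q rmorph1 -mpolyC1 mderivC big1 // => i _.
  by rewrite mderivC rmorph0 mul0r.
have QX : forall i, Q 'X_i.
  move=> i; rewrite /Q comp_mpolyXU -tnth_nth.
  under eq_bigr do rewrite mderivXU comp_mpolyC rmorph_nat.
  by rewrite sum_delta.
have QXn : forall i e, Q ('X_i ^+ e).
  move=> i; elim=> [|e IH]; first by rewrite expr0.
  by rewrite exprS; apply: QM.
elim/mpolyind: p => [|c m p _ _ IH].
  rewrite rmorph0 mderiv0 big1 // => i _; by rewrite mderiv0 rmorph0 mul0r.
rewrite comp_mpolyD mderivD IH comp_mpolyZ mderivZ.
have -> : ('X_[m] \mPo lq)^`M(j) = \sum_(i < n) ('X_[m]^`M(i) \mPo lq) * (tnth lq i)^`M(j).
  rewrite mpolyXE_id; apply: (big_ind Q) => //.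
rewrite scaler_sumr -big_split /=; apply: eq_bigr => i _.
by rewrite mderivD mderivZ comp_mpolyD comp_mpolyZ mulrDl scalerAl.
Qed.

Lemma val_xv (i : 'I_3) : nat_of_ord (xv i) = i.
Proof. by rewrite /xv inordK // (leq_trans (ltn_ord i)). Qed.
Lemma val_yv (i : 'I_3) : nat_of_ord (yv i) = (3 + i)%N.
Proof. rewrite /yv inordK //; have := ltn_ord i; lia. Qed.
Lemma val_zv (i : 'I_3) : nat_of_ord (zv i) = (6 + i)%N.
Proof. rewrite /zv inordK //; have := ltn_ord i; lia. Qed.
Lemma val_uv (i : 'I_3) : nat_of_ord (uv i) = (9 + i)%N.
Proof. rewrite /uv inordK //; have := ltn_ord i; lia. Qed.

Definition liftv {R : comRingType} (phi : 'I_3 -> 'I_12) (p : {mpoly R[3]}) : {mpoly R[12]} :=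
  p \mPo [tuple 'X_(phi i) | i < 3].

Lemma dlift (R : comRingType) phi (p : {mpoly R[3]}) k :
  (liftv phi p)^`M(k) = \sum_(i < 3) liftv phi (p^`M(i)) * ((phi i == k)%:R)%:MP.
Proof.
rewrite /liftv mderiv_comp; apply: eq_bigr => i _.
by rewrite tnth_mktuple mderivXU.
Qed.

Lemma dlift_same (R : comRingType) phi (p : {mpoly R[3]}) a :
  (forall i, (phi i == phi a) = (i == a)) ->
  (liftv phi p)^`M(phi a) = liftv phi (p^`M(a)).
Proof.
move=> H; rewrite dlift.
under eq_bigr do rewrite H rmorph_nat eq_sym mulrC.
by rewrite sum_delta.
Qed.

Lemma dlift_zero (R : comRingType) phi (p : {mpoly R[3]}) k :
  (forall i, phi i != k) -> (liftv phi p)^`M(k) = 0.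
Proof.
move=> H; rewrite dlift big1 // => i _.
by rewrite (negbTE (H i)) mpolyC0 mulr0.
Qed.

Lemma comp_comp (R : comRingType) n k l (p : {mpoly R[n]}) (lq : n.-tuple {mpoly R[k]})
  (lr : k.-tuple {mpoly R[l]}) :
  (p \mPo lq) \mPo lr = p \mPo [tuple (tnth lq i \mPo lr) | i < n].
Proof.
elim/mpolyind: p => [|c m p _ _ IH]; first by rewrite !comp_mpoly0.
rewrite !comp_mpolyD !comp_mpolyZ IH; congr (_ *: _ + _).
rewrite !comp_mpolyX rmorph_prod; apply: eq_bigr => i _.
by rewrite rmorphXn tnth_mktuple.
Qed.

Lemma rename_X (R : comRingType) s (i : 'I_12) : rename s ('X_i : {mpoly R[12]}) = 'X_(s i).
Proof. by rewrite /rename comp_mpolyXU -tnth_nth tnth_mktuple. Qed.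

Lemma rename_liftv (R : comRingType) s phi (p : {mpoly R[3]}) :
  rename s (liftv phi p) = liftv (fun i => s (phi i)) p.
Proof.
rewrite /rename /liftv comp_comp; congr (_ \mPo _); apply: eq_mktuple => i.
by rewrite tnth_mktuple comp_mpolyXU -tnth_nth tnth_mktuple.
Qed.

Lemma x_to_y_xv i : x_to_y (xv i) = yv i.
Proof.
apply: ord_inj; rewrite /x_to_y val_xv ltn_ord val_yv inordK; first lia.
have := ltn_ord i; lia.
Qed.
Lemma x_to_z_xv i : x_to_z (xv i) = zv i.
Proof.
apply: ord_inj; rewrite /x_to_z val_xv ltn_ord val_zv inordK; first lia.
have := ltn_ord i; lia.
Qed.
Lemma x_to_z_uv i : x_to_z (uv i) = uv i.
Proof. rewrite /x_to_z val_uv; by []. Qed.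

Lemma swap_sum (R : comRingType) (I J : finType) (c : I -> R) (X : I -> J -> R) :
  \sum_i c i * \sum_j X i j = \sum_j \sum_i c i * X i j.
Proof. rewrite [RHS]exchange_big; apply: eq_bigr => i _; by rewrite mulr_sumr. Qed.

Lemma sum3 (R : comRingType) (G : 'I_3 -> R) : \sum_(i < 3) G i = G o1 + G o2 + G o3.
Proof.
rewrite !big_ord_recr big_ord0 /= add0r.
by congr (G _ + G _ + G _); apply: val_inj.
Qed.

Lemma det3 (R : comRingType) (A : 'M[R]_3) : \det A =
  A o1 o1 * A o2 o2 * A o3 o3 - A o1 o1 * A o2 o3 * A o3 o2 - A o1 o2 * A o2 o1 * A o3 o3
  + A o1 o2 * A o2 o3 * A o3 o1 + A o1 o3 * A o2 o1 * A o3 o2 - A o1 o3 * A o2 o2 * A o3 o1.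
Proof.
rewrite (expand_det_row _ ord0) !big_ord_recr big_ord0 /cofactor /=.
rewrite !(expand_det_row _ ord0) !big_ord_recr !big_ord0 /cofactor /=.
rewrite !det_mx11 !mxE /=.
pose B (a b : nat) := A (inord a) (inord b).
have E : forall i j : 'I_3, A i j = B i j by move=> i j; rewrite /B !inord_val.
rewrite !E /= !expr0 !expr1. clear E. ring.
Qed.

Definition det3f {T : zmodType} (F : 'I_3 -> 'I_3 -> 'I_3 -> T) : T :=
  F o1 o2 o3 - F o1 o3 o2 - F o2 o1 o3 + F o2 o3 o1 + F o3 o1 o2 - F o3 o2 o1.

Lemma det3f_ext {T : zmodType} (F G : 'I_3 -> 'I_3 -> 'I_3 -> T) :
  (forall a b c, F a b c = G a b c) -> det3f F = det3f G.
Proof. by move=> H; rewrite /det3f !H. Qed.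

Lemma sum_S3 (R : comRingType) (F : 'I_3 -> 'I_3 -> 'I_3 -> R) :
  \sum_(s : 'S_3) (-1) ^+ s * F (s o1) (s o2) (s o3) = det3f F.
Proof.
pose M (i j k : 'I_3) : 'M[R]_3 :=
  \matrix_(a < 3, b < 3) ((b == (if val a == 0%N then i else if val a == 1%N then j else k))%:R).
have H1 : forall s : 'S_3, F (s o1) (s o2) (s o3) =
   \sum_i \sum_j \sum_k F i j k * \prod_(a < 3) M i j k a (s a).
  move=> s.
  have P : forall i j k, \prod_(a < 3) M i j k a (s a) =
     (s o1 == i)%:R * ((s o2 == j)%:R * (s o3 == k)%:R).
    move=> i j k; rewrite !big_ord_recl big_ord0 !mxE /=.
    have -> : s ord0 = s o1 by congr (s _); apply: val_inj.
    have -> : s (lift ord0 ord0) = s o2 by congr (s _); apply: val_inj.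
    have -> : s (lift ord0 (lift ord0 ord0)) = s o3 by congr (s _); apply: val_inj.
    by rewrite mulr1.
  symmetry.
  rewrite (eq_bigr (fun i => (s o1 == i)%:R * \sum_j ((s o2 == j)%:R * \sum_k ((s o3 == k)%:R * F i j k)))); last first.
    move=> i _; rewrite mulr_sumr; apply: eq_bigr => j _.
    rewrite !mulr_sumr; apply: eq_bigr => k _; rewrite P; ring.
  rewrite sum_delta sum_delta sum_delta //.
rewrite (eq_bigr _ (fun s _ => congr1 _ (H1 s))).
rewrite swap_sum; under eq_bigr do rewrite swap_sum; under eq_bigr do under eq_bigr do rewrite swap_sum.
have H2 : forall i j k, \sum_(s : 'S_3) (-1) ^+ s * (F i j k * \prod_(a < 3) M i j k a (s a))
   = F i j k * \det (M i j k).
  move=> i j k; rewrite /determinant mulr_sumr; apply: eq_bigr => s _; exact: mulrCA.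
under eq_bigr do under eq_bigr do under eq_bigr do rewrite H2.
have detM : forall i j k, \det (M i j k) =
  (i == o1)%:R * (j == o2)%:R * (k == o3)%:R - (i == o1)%:R * (j == o3)%:R * (k == o2)%:R
  - (i == o2)%:R * (j == o1)%:R * (k == o3)%:R + (i == o2)%:R * (j == o3)%:R * (k == o1)%:R
  + (i == o3)%:R * (j == o1)%:R * (k == o2)%:R - (i == o3)%:R * (j == o2)%:R * (k == o1)%:R.
  by move=> i j k; rewrite det3 !mxE /= ![o1 == _]eq_sym ![o2 == _]eq_sym ![o3 == _]eq_sym.
under eq_bigr do under eq_bigr do under eq_bigr do rewrite detM.
rewrite !sum3.
have e12 : (o1 == o2) = false by []. have e13 : (o1 == o3) = false by [].
have e21 : (o2 == o1) = false by []. have e23 : (o2 == o3) = false by [].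
have e31 : (o3 == o1) = false by []. have e32 : (o3 == o2) = false by [].
rewrite !eqxx !e12 !e13 !e21 !e23 !e31 !e32 /=.
rewrite ?(mul0r, mulr0, mul1r, mulr1, subr0, addr0, add0r, sub0r).
clear H1 H2 detM M. rewrite /det3f. ring.
Qed.

Lemma dprod3 (R : comRingType) n (k : 'I_n) (A B C : {mpoly R[n]}) :
  (A * B * C)^`M(k) = A^`M(k) * B * C + A * B^`M(k) * C + A * B * C^`M(k).
Proof. rewrite !mderivM; ring. Qed.

Definition indep {R : comRingType} (S : pred 'I_12) (p : {mpoly R[12]}) :=
  forall k, S k -> p^`M(k) = 0.

Lemma indep_d (R : comRingType) S (p : {mpoly R[12]}) j : indep S p -> indep S (p^`M(j)).
Proof. by move=> H k Hk; rewrite mderiv_comm H // mderiv0. Qed.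
Arguments indep_d {R S p}.

Definition SA (k : 'I_12) := (3 <= k)%N && (k < 9)%N.
Definition SB (k : 'I_12) := (k < 3)%N || ((6 <= k)%N && (k < 9)%N).
Definition SC (k : 'I_12) := (k < 6)%N.

Lemma SA_y i : SA (yv i). Proof. rewrite /SA val_yv; have := ltn_ord i; lia. Qed.
Lemma SA_z i : SA (zv i). Proof. rewrite /SA val_zv; have := ltn_ord i; lia. Qed.
Lemma SB_x i : SB (xv i). Proof. rewrite /SB val_xv; have := ltn_ord i; lia. Qed.
Lemma SB_z i : SB (zv i). Proof. rewrite /SB val_zv; have := ltn_ord i; lia. Qed.
Lemma SC_x i : SC (xv i). Proof. rewrite /SC val_xv; have := ltn_ord i; lia. Qed.
Lemma SC_y i : SC (yv i). Proof. rewrite /SC val_yv; have := ltn_ord i; lia. Qed.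

Lemma Omega6 (R : comRingType) (A B C : {mpoly R[12]}) :
  indep SA A -> indep SB B -> indep SC C ->
  Omega (A * B * C) = det3f (fun a b c => A^`M(xv a) * B^`M(yv b) * C^`M(zv c)).
Proof.
move=> hA hB hC; rewrite /Omega.
have E : forall s : 'S_3,
  (-1) ^+ s *: (((A * B * C)^`M(zv (s o3)))^`M(yv (s o2)))^`M(xv (s o1)) =
  (-1) ^+ s * (A^`M(xv (s o1)) * B^`M(yv (s o2)) * C^`M(zv (s o3))).
  move=> s.
  rewrite dprod3 (hA _ (SA_z _)) (hB _ (SB_z _)) !(mul0r, mulr0, add0r, addr0).
  rewrite dprod3 (hA _ (SA_y _)) (indep_d _ hC _ (SC_y _)) !(mul0r, mulr0, add0r, addr0).
  rewrite dprod3 (indep_d _ hB _ (SB_x _)) (indep_d _ hC _ (SC_x _)) !(mul0r, mulr0, add0r, addr0).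
  by rewrite scaler_sign mulr_sign.
rewrite (eq_bigr _ (fun s _ => E s)).
exact: (sum_S3 _ (fun a b c => A^`M(xv a) * B^`M(yv b) * C^`M(zv c))).
Qed.

Lemma OmegaD (R : comRingType) (p q : {mpoly R[12]}) : Omega (p + q) = Omega p + Omega q.
Proof. rewrite /Omega -big_split; apply: eq_bigr => s _; by rewrite !mderivD scalerDr. Qed.
Lemma OmegaN (R : comRingType) (p : {mpoly R[12]}) : Omega (- p) = - Omega p.
Proof. rewrite /Omega -sumrN; apply: eq_bigr => s _; by rewrite !mderivN scalerN. Qed.
Lemma OmegaB (R : comRingType) (p q : {mpoly R[12]}) : Omega (p - q) = Omega p - Omega q.
Proof. by rewrite OmegaD OmegaN. Qed.

Lemma Omega_det3f (R : comRingType) (F : 'I_3 -> 'I_3 -> 'I_3 -> {mpoly R[12]}) :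
  Omega (det3f F) = det3f (fun a b c => Omega (F a b c)).
Proof. by rewrite /det3f !OmegaD !OmegaN. Qed.

Lemma Omega3 (R : comRingType) (A B C : {mpoly R[12]}) :
  indep SA A -> indep SB B -> indep SC C ->
  iter 3 (@Omega R) (A * B * C) =
  det3f (fun a b c => det3f (fun a' b' c' => det3f (fun a'' b'' c'' =>
    A^`M(xv a)^`M(xv a')^`M(xv a'') * B^`M(yv b)^`M(yv b')^`M(yv b'')
    * C^`M(zv c)^`M(zv c')^`M(zv c'')))).
Proof.
move=> hA hB hC /=.
rewrite Omega6 // !Omega_det3f; apply: det3f_ext => a b c.
rewrite Omega6; try by do ?apply: indep_d.
rewrite Omega_det3f; apply: det3f_ext => a' b' c'.
by rewrite Omega6; try by do ?apply: indep_d.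
Qed.

Lemma meval_zero (R : comRingType) n (p : {mpoly R[n]}) : p.@[fun _ => 0] = p@_0.
Proof.
elim/mpolyind: p => [|c m p _ _ IH]; first by rewrite rmorph0 mcoeff0.
rewrite mevalD mcoeffD IH mevalZ mcoeffZ; congr (_ * _ + _).
rewrite mpolyXE_id !rmorph_prod; apply: eq_bigr => i _; rewrite !rmorphXn /=.
rewrite mevalXU mcoeffX; congr (_ ^+ _).
have -> : (U_(i) == 0)%MM = false; last by [].
by apply/negbTE/eqP => /(congr1 mdeg); rewrite mdeg1 mdeg0.
Qed.

Definition vw {R : comRingType} (w : 'I_3 -> R) (k : 'I_12) : R :=
  if (9 <= k)%N then w (inord (k - 9)) else 0.

Lemma vw_x (R : comRingType) (w : 'I_3 -> R) i : vw w (xv i) = 0.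
Proof. rewrite /vw val_xv; have := ltn_ord i; case: ifP => //; lia. Qed.
Lemma vw_y (R : comRingType) (w : 'I_3 -> R) i : vw w (yv i) = 0.
Proof. rewrite /vw val_yv; have := ltn_ord i; case: ifP => //; lia. Qed.
Lemma vw_z (R : comRingType) (w : 'I_3 -> R) i : vw w (zv i) = 0.
Proof. rewrite /vw val_zv; have := ltn_ord i; case: ifP => //; lia. Qed.
Lemma vw_u (R : comRingType) (w : 'I_3 -> R) i : vw w (uv i) = w i.
Proof.
rewrite /vw val_uv leq_addr; congr (w _); apply: ord_inj.
by rewrite inordK ?addKn // addKn ltn_ord.
Qed.

Lemma vw_yz (R : comRingType) (w : 'I_3 -> R) k : vw w (yz_to_x k) = vw w k.
Proof.
rewrite /yz_to_x; case: ifP => // /andP [h1 h2].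
have Hm := ltn_pmod k (isT : (0 < 3)%N).
rewrite /vw inordK; last lia.
have -> : (9 <= k %% 3)%N = false by lia.
by have -> : (9 <= k)%N = false by lia.
Qed.

Lemma xv_eq i a : (xv i == xv a) = (i == a).
Proof.
apply/eqP/eqP => [E|->] //; apply: ord_inj.
by have := congr1 (@nat_of_ord _) E; rewrite !val_xv.
Qed.
Lemma yv_eq i a : (yv i == yv a) = (i == a).
Proof.
apply/eqP/eqP => [E|->] //; apply: ord_inj.
have := congr1 (@nat_of_ord _) E; rewrite !val_yv; lia.
Qed.

Definition Df {R : comRingType} (f : {mpoly R[3]}) (a b c : 'I_3) : R :=
  (f^`M(a)^`M(b)^`M(c))@_0.

Lemma alpha (R : comRingType) (f : {mpoly R[3]}) (w : 'I_3 -> R) a b c :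
  ((liftv xv f)^`M(xv a)^`M(xv b)^`M(xv c)).@[vw w] = Df f a b c.
Proof.
rewrite !dlift_same; try by move=> i; rewrite xv_eq.
rewrite /liftv comp_mpoly_meval /Df -meval_zero; apply: meval_eq => i.
by rewrite tnth_mktuple mevalXU vw_x.
Qed.

Lemma beta (R : comRingType) (f : {mpoly R[3]}) (w : 'I_3 -> R) a b c :
  ((liftv yv f)^`M(yv a)^`M(yv b)^`M(yv c)).@[vw w] = Df f a b c.
Proof.
rewrite !dlift_same; try by move=> i; rewrite yv_eq.
rewrite /liftv comp_mpoly_meval /Df -meval_zero; apply: meval_eq => i.
by rewrite tnth_mktuple mevalXU vw_y.
Qed.

Definition Lz (R : comRingType) : {mpoly R[12]} := \sum_(i < 3) 'X_(uv i) * 'X_(zv i).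

Lemma uv_zv i a : (uv i == zv a) = false.
Proof.
apply/eqP => E; have := congr1 (@nat_of_ord _) E; rewrite val_uv val_zv; have := ltn_ord a; lia.
Qed.
Lemma zv_eq i a : (zv i == zv a) = (i == a).
Proof.
apply/eqP/eqP => [E|->] //; apply: ord_inj.
have := congr1 (@nat_of_ord _) E; rewrite !val_zv; lia.
Qed.

Lemma dXu (R : comRingType) b a : ('X_(uv b) : {mpoly R[12]})^`M(zv a) = 0.
Proof. by rewrite mderivXU uv_zv mpolyC0. Qed.

Lemma dLz (R : comRingType) a : (Lz R)^`M(zv a) = 'X_(uv a).
Proof.
rewrite /Lz raddf_sum /=.
under eq_bigr do rewrite mderivM dXu mderivXU zv_eq rmorph_nat mul0r add0r mulrC eq_sym.
by rewrite sum_delta.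
Qed.

Lemma Lz_eval (R : comRingType) (w : 'I_3 -> R) : (Lz R).@[vw w] = 0.
Proof.
rewrite /Lz rmorph_sum big1 // => i _.
by rewrite rmorphM /= !mevalXU vw_z mulr0.
Qed.

Lemma gamma (R : comRingType) (w : 'I_3 -> R) a b c :
  (((Lz R) ^+ 3)^`M(zv a)^`M(zv b)^`M(zv c)).@[vw w] = 6 * (w a * w b * w c).
Proof.
have -> : (Lz R) ^+ 3 = Lz R * Lz R * Lz R by rewrite !exprS expr0 mulr1 mulrA.
rewrite dprod3 !mderivD !dprod3 !mderivD !dprod3 !dLz !dXu.
rewrite !(mul0r, mulr0, add0r, addr0).
rewrite !(rmorphD, rmorphM) /= Lz_eval !mevalXU !vw_u.
ring.
Qed.

Lemma dpow0 (R : comRingType) n (p : {mpoly R[n]}) k e : p^`M(k) = 0 -> (p ^+ e)^`M(k) = 0.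
Proof.
move=> H; elim: e => [|e IH]; first by rewrite expr0 -mpolyC1 mderivC.
by rewrite exprS mderivM H IH mul0r mulr0 addr0.
Qed.

Lemma indepA (R : comRingType) (f : {mpoly R[3]}) : indep SA (liftv xv f).
Proof.
move=> k Hk; apply: dlift_zero => i; apply/eqP => E; move: Hk.
rewrite -E /SA val_xv; have := ltn_ord i; lia.
Qed.
Lemma indepB (R : comRingType) (f : {mpoly R[3]}) : indep SB (liftv yv f).
Proof.
move=> k Hk; apply: dlift_zero => i; apply/eqP => E; move: Hk.
rewrite -E /SB val_yv; have := ltn_ord i; lia.
Qed.
Lemma indepC (R : comRingType) : indep SC ((Lz R) ^+ 3).
Proof.
move=> k Hk; apply: dpow0.
rewrite /Lz raddf_sum /= big1 // => i _.
rewrite mderivM !mderivXU.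
have -> : (uv i == k) = false.
  apply/eqP => E; move: Hk; rewrite -E /SC val_uv; lia.
have -> : (zv i == k) = false.
  apply/eqP => E; move: Hk; rewrite -E /SC val_zv; lia.
by rewrite mpolyC0 mulr0 mul0r addr0.
Qed.

Lemma meval_det3f (R : comRingType) (v : 'I_12 -> R) (F : 'I_3 -> 'I_3 -> 'I_3 -> {mpoly R[12]}) :
  (det3f F).@[v] = det3f (fun a b c => (F a b c).@[v]).
Proof. by rewrite /det3f !raddfD !raddfN. Qed.

Lemma J3_eval (R : comRingType) (f g : {mpoly R[3]}) (w : 'I_3 -> R) :
  (J3 (lift_x f) (lift_x g) (u_x R ^+ 3)).@[vw w] =
  det3f (fun a b c => det3f (fun a' b' c' => det3f (fun a'' b'' c'' =>
    Df f a a' a'' * Df g b b' b'' * (6 * (w c * w c' * w c''))))).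
Proof.
rewrite /J3 {1}/rename comp_mpoly_meval.
have E : forall p : {mpoly R[12]},
    p.@[fun i => (tnth [tuple 'X_(yz_to_x k) | k < 12] i).@[vw w]] = p.@[vw w].
  by move=> p; apply: meval_eq => i; rewrite tnth_mktuple mevalXU vw_yz.
rewrite E.
have -> : lift_x f = liftv xv f by [].
have -> : rename x_to_y (lift_x g) = liftv yv g.
  rewrite /lift_x -/(liftv xv g) rename_liftv /liftv; congr (_ \mPo _).
  by apply: eq_mktuple => i; rewrite x_to_y_xv.
have -> : rename x_to_z (u_x R ^+ 3) = Lz R ^+ 3.
  rewrite /rename rmorphXn; congr (_ ^+ 3).
  rewrite /u_x /Lz rmorph_sum; apply: eq_bigr => i _.
  by rewrite rmorphM /= -!/(rename x_to_z _) !rename_X x_to_z_uv x_to_z_xv.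
rewrite (@Omega3 _ _ _ _ (indepA _ f) (indepB _ g) (indepC R)).
rewrite meval_det3f; apply: det3f_ext => a b c.
rewrite meval_det3f; apply: det3f_ext => a' b' c'.
rewrite meval_det3f; apply: det3f_ext => a'' b'' c''.
by rewrite !rmorphM /= alpha beta gamma.
Qed.

Lemma Df_E (R : comRingType) (f : {mpoly R[3]}) a b c :
  Df f a b c = f@_(U_(c) + U_(b) + U_(a))%MM *+ ((U_(c) + U_(b))%MM a).+1 *+ (U_(c)%MM b).+1.
Proof.
rewrite /Df !mcoeff_mderiv mnm0E add0m mulr1n.
by rewrite mnm1E !mnmDE !mnm1E.
Qed.

Lemma srt21 (m : 'X_{1..3}) : (m + U_(o2) + U_(o1) = m + U_(o1) + U_(o2))%MM.
Proof. by rewrite -!addmA [(U_(o2) + _)%MM]addmC. Qed.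
Lemma srt31 (m : 'X_{1..3}) : (m + U_(o3) + U_(o1) = m + U_(o1) + U_(o3))%MM.
Proof. by rewrite -!addmA [(U_(o3) + _)%MM]addmC. Qed.
Lemma srt32 (m : 'X_{1..3}) : (m + U_(o3) + U_(o2) = m + U_(o2) + U_(o3))%MM.
Proof. by rewrite -!addmA [(U_(o3) + _)%MM]addmC. Qed.
Lemma srt21b : (U_(o2) + U_(o1) = U_(o1) + U_(o2) :> 'X_{1..3})%MM.
Proof. exact: addmC. Qed.
Lemma srt31b : (U_(o3) + U_(o1) = U_(o1) + U_(o3) :> 'X_{1..3})%MM.
Proof. exact: addmC. Qed.
Lemma srt32b : (U_(o3) + U_(o2) = U_(o2) + U_(o3) :> 'X_{1..3})%MM.
Proof. exact: addmC. Qed.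

Definition w_of {R : comRingType} (x y z : R) (i : 'I_3) : R :=
  if val i == 0%N then x else if val i == 1%N then y else z.
Ltac dv_tac := rewrite Df_E !mnmDE !mnm1E /=;
  (do 3 rewrite ?(srt21, srt31, srt32, srt21b, srt31b, srt32b));
  rewrite /cf -mulrnA //.
Lemma Dv111 (R : comRingType) (f : {mpoly R[3]}) : Df f o1 o1 o1 = cf f o1 o1 o1 *+ 6.
Proof. dv_tac. Qed.
Lemma Dv112 (R : comRingType) (f : {mpoly R[3]}) : Df f o1 o1 o2 = cf f o1 o1 o2 *+ 2.
Proof. dv_tac. Qed.
Lemma Dv113 (R : comRingType) (f : {mpoly R[3]}) : Df f o1 o1 o3 = cf f o1 o1 o3 *+ 2.
Proof. dv_tac. Qed.
Lemma Dv121 (R : comRingType) (f : {mpoly R[3]}) : Df f o1 o2 o1 = cf f o1 o1 o2 *+ 2.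
Proof. dv_tac. Qed.
Lemma Dv122 (R : comRingType) (f : {mpoly R[3]}) : Df f o1 o2 o2 = cf f o1 o2 o2 *+ 2.
Proof. dv_tac. Qed.
Lemma Dv123 (R : comRingType) (f : {mpoly R[3]}) : Df f o1 o2 o3 = cf f o1 o2 o3 *+ 1.
Proof. dv_tac. Qed.
Lemma Dv131 (R : comRingType) (f : {mpoly R[3]}) : Df f o1 o3 o1 = cf f o1 o1 o3 *+ 2.
Proof. dv_tac. Qed.
Lemma Dv132 (R : comRingType) (f : {mpoly R[3]}) : Df f o1 o3 o2 = cf f o1 o2 o3 *+ 1.
Proof. dv_tac. Qed.
Lemma Dv133 (R : comRingType) (f : {mpoly R[3]}) : Df f o1 o3 o3 = cf f o1 o3 o3 *+ 2.
Proof. dv_tac. Qed.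
Lemma Dv211 (R : comRingType) (f : {mpoly R[3]}) : Df f o2 o1 o1 = cf f o1 o1 o2 *+ 2.
Proof. dv_tac. Qed.
Lemma Dv212 (R : comRingType) (f : {mpoly R[3]}) : Df f o2 o1 o2 = cf f o1 o2 o2 *+ 2.
Proof. dv_tac. Qed.
Lemma Dv213 (R : comRingType) (f : {mpoly R[3]}) : Df f o2 o1 o3 = cf f o1 o2 o3 *+ 1.
Proof. dv_tac. Qed.
Lemma Dv221 (R : comRingType) (f : {mpoly R[3]}) : Df f o2 o2 o1 = cf f o1 o2 o2 *+ 2.
Proof. dv_tac. Qed.
Lemma Dv222 (R : comRingType) (f : {mpoly R[3]}) : Df f o2 o2 o2 = cf f o2 o2 o2 *+ 6.
Proof. dv_tac. Qed.
Lemma Dv223 (R : comRingType) (f : {mpoly R[3]}) : Df f o2 o2 o3 = cf f o2 o2 o3 *+ 2.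
Proof. dv_tac. Qed.
Lemma Dv231 (R : comRingType) (f : {mpoly R[3]}) : Df f o2 o3 o1 = cf f o1 o2 o3 *+ 1.
Proof. dv_tac. Qed.
Lemma Dv232 (R : comRingType) (f : {mpoly R[3]}) : Df f o2 o3 o2 = cf f o2 o2 o3 *+ 2.
Proof. dv_tac. Qed.
Lemma Dv233 (R : comRingType) (f : {mpoly R[3]}) : Df f o2 o3 o3 = cf f o2 o3 o3 *+ 2.
Proof. dv_tac. Qed.
Lemma Dv311 (R : comRingType) (f : {mpoly R[3]}) : Df f o3 o1 o1 = cf f o1 o1 o3 *+ 2.
Proof. dv_tac. Qed.
Lemma Dv312 (R : comRingType) (f : {mpoly R[3]}) : Df f o3 o1 o2 = cf f o1 o2 o3 *+ 1.
Proof. dv_tac. Qed.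
Lemma Dv313 (R : comRingType) (f : {mpoly R[3]}) : Df f o3 o1 o3 = cf f o1 o3 o3 *+ 2.
Proof. dv_tac. Qed.
Lemma Dv321 (R : comRingType) (f : {mpoly R[3]}) : Df f o3 o2 o1 = cf f o1 o2 o3 *+ 1.
Proof. dv_tac. Qed.
Lemma Dv322 (R : comRingType) (f : {mpoly R[3]}) : Df f o3 o2 o2 = cf f o2 o2 o3 *+ 2.
Proof. dv_tac. Qed.
Lemma Dv323 (R : comRingType) (f : {mpoly R[3]}) : Df f o3 o2 o3 = cf f o2 o3 o3 *+ 2.
Proof. dv_tac. Qed.
Lemma Dv331 (R : comRingType) (f : {mpoly R[3]}) : Df f o3 o3 o1 = cf f o1 o3 o3 *+ 2.
Proof. dv_tac. Qed.
Lemma Dv332 (R : comRingType) (f : {mpoly R[3]}) : Df f o3 o3 o2 = cf f o2 o3 o3 *+ 2.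
Proof. dv_tac. Qed.
Lemma Dv333 (R : comRingType) (f : {mpoly R[3]}) : Df f o3 o3 o3 = cf f o3 o3 o3 *+ 6.
Proof. dv_tac. Qed.

Definition PS {R : comRingType} (f111 f112 f113 f122 f123 f133 f222 f223 f233 f333 g111 g112 g113 g122 g123 g133 g222 g223 g233 g333 x y z : R) : R :=
  (216 * (f222 * g333) - 72 * (f223 * g233) + 72 * (f233 * g223) - 216 * (f333 * g222)) * (x*x*x)
  + (- 216 * (f122 * g333) + 72 * (f123 * g233) - 72 * (f133 * g223) + 72 * (f223 * g133) - 72 * (f233 * g123) + 216 * (f333 * g122)) * (x*x*y)
  + (72 * (f122 * g233) - 72 * (f123 * g223) + 216 * (f133 * g222) - 216 * (f222 * g133) + 72 * (f223 * g123) - 72 * (f233 * g122)) * (x*x*z)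
  + (216 * (f112 * g333) - 72 * (f113 * g233) - 72 * (f123 * g133) + 72 * (f133 * g123) + 72 * (f233 * g113) - 216 * (f333 * g112)) * (x*y*y)
  + (- 144 * (f112 * g233) + 144 * (f113 * g223) + 144 * (f122 * g133) - 144 * (f133 * g122) - 144 * (f223 * g113) + 144 * (f233 * g112)) * (x*y*z)
  + (72 * (f112 * g223) - 216 * (f113 * g222) - 72 * (f122 * g123) + 72 * (f123 * g122) + 216 * (f222 * g113) - 72 * (f223 * g112)) * (x*z*z)
  + (- 216 * (f111 * g333) + 72 * (f113 * g133) - 72 * (f133 * g113) + 216 * (f333 * g111)) * (y*y*y)
  + (216 * (f111 * g233) - 72 * (f112 * g133) - 72 * (f113 * g123) + 72 * (f123 * g113) + 72 * (f133 * g112) - 216 * (f233 * g111)) * (y*y*z)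
  + (- 216 * (f111 * g223) + 72 * (f112 * g123) + 72 * (f113 * g122) - 72 * (f122 * g113) - 72 * (f123 * g112) + 216 * (f223 * g111)) * (y*z*z)
  + (216 * (f111 * g222) - 72 * (f112 * g122) + 72 * (f122 * g112) - 216 * (f222 * g111)) * (z*z*z).
Definition FspecS {R : comRingType} (F : 'I_3 -> 'I_3 -> 'I_3 -> R) (f111 f112 f113 f122 f123 f133 f222 f223 f233 f333 : R) :=
  F o1 o1 o1 = f111 *+ 6 /\
  F o1 o1 o2 = f112 *+ 2 /\
  F o1 o1 o3 = f113 *+ 2 /\
  F o1 o2 o1 = f112 *+ 2 /\
  F o1 o2 o2 = f122 *+ 2 /\
  F o1 o2 o3 = f123 *+ 1 /\
  F o1 o3 o1 = f113 *+ 2 /\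
  F o1 o3 o2 = f123 *+ 1 /\
  F o1 o3 o3 = f133 *+ 2 /\
  F o2 o1 o1 = f112 *+ 2 /\
  F o2 o1 o2 = f122 *+ 2 /\
  F o2 o1 o3 = f123 *+ 1 /\
  F o2 o2 o1 = f122 *+ 2 /\
  F o2 o2 o2 = f222 *+ 6 /\
  F o2 o2 o3 = f223 *+ 2 /\
  F o2 o3 o1 = f123 *+ 1 /\
  F o2 o3 o2 = f223 *+ 2 /\
  F o2 o3 o3 = f233 *+ 2 /\
  F o3 o1 o1 = f113 *+ 2 /\
  F o3 o1 o2 = f123 *+ 1 /\
  F o3 o1 o3 = f133 *+ 2 /\
  F o3 o2 o1 = f123 *+ 1 /\
  F o3 o2 o2 = f223 *+ 2 /\
  F o3 o2 o3 = f233 *+ 2 /\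
  F o3 o3 o1 = f133 *+ 2 /\
  F o3 o3 o2 = f233 *+ 2 /\
  F o3 o3 o3 = f333 *+ 6.

Lemma expandS (R : comRingType) (F G : 'I_3 -> 'I_3 -> 'I_3 -> R) (f111 f112 f113 f122 f123 f133 f222 f223 f233 f333 g111 g112 g113 g122 g123 g133 g222 g223 g233 g333 : R) (w : 'I_3 -> R) :
  FspecS F f111 f112 f113 f122 f123 f133 f222 f223 f233 f333 -> FspecS G g111 g112 g113 g122 g123 g133 g222 g223 g233 g333 ->
  det3f (fun a b c => det3f (fun a' b' c' => det3f (fun a'' b'' c'' =>
    F a a' a'' * G b b' b'' * (6 * (w c * w c' * w c''))))) = PS f111 f112 f113 f122 f123 f133 f222 f223 f233 f333 g111 g112 g113 g122 g123 g133 g222 g223 g233 g333 (w o1) (w o2) (w o3).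
Proof.
move=> [hf0 [hf1 [hf2 [hf3 [hf4 [hf5 [hf6 [hf7 [hf8 [hf9 [hf10 [hf11 [hf12 [hf13 [hf14 [hf15 [hf16 [hf17 [hf18 [hf19 [hf20 [hf21 [hf22 [hf23 [hf24 [hf25 hf26]]]]]]]]]]]]]]]]]]]]]]]]]] [hg0 [hg1 [hg2 [hg3 [hg4 [hg5 [hg6 [hg7 [hg8 [hg9 [hg10 [hg11 [hg12 [hg13 [hg14 [hg15 [hg16 [hg17 [hg18 [hg19 [hg20 [hg21 [hg22 [hg23 [hg24 [hg25 hg26]]]]]]]]]]]]]]]]]]]]]]]]]].
rewrite /det3f; cbv beta.
rewrite hf0 hf1 hf2 hf3 hf4 hf5 hf6 hf7 hf8 hf9 hf10 hf11 hf12 hf13 hf14 hf15 hf16 hf17 hf18 hf19 hf20 hf21 hf22 hf23 hf24 hf25 hf26 hg0 hg1 hg2 hg3 hg4 hg5 hg6 hg7 hg8 hg9 hg10 hg11 hg12 hg13 hg14 hg15 hg16 hg17 hg18 hg19 hg20 hg21 hg22 hg23 hg24 hg25 hg26.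
move: (w o1) (w o2) (w o3) => x y z.
rewrite /PS.
ring.
Qed.


Lemma Pw {R : comRingType} {f g : {mpoly R[3]}} :
  J3 (lift_x f) (lift_x g) (u_x R ^+ 3) = 0 ->
  forall x y z, PS (cf f o1 o1 o1) (cf f o1 o1 o2) (cf f o1 o1 o3) (cf f o1 o2 o2) (cf f o1 o2 o3) (cf f o1 o3 o3) (cf f o2 o2 o2) (cf f o2 o2 o3) (cf f o2 o3 o3) (cf f o3 o3 o3) (cf g o1 o1 o1) (cf g o1 o1 o2) (cf g o1 o1 o3) (cf g o1 o2 o2) (cf g o1 o2 o3) (cf g o1 o3 o3) (cf g o2 o2 o2) (cf g o2 o2 o3) (cf g o2 o3 o3) (cf g o3 o3 o3) x y z = 0.
Proof.
move=> H x y z.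
have HF : FspecS (Df f) (cf f o1 o1 o1) (cf f o1 o1 o2) (cf f o1 o1 o3) (cf f o1 o2 o2) (cf f o1 o2 o3) (cf f o1 o3 o3) (cf f o2 o2 o2) (cf f o2 o2 o3) (cf f o2 o3 o3) (cf f o3 o3 o3) by rewrite /FspecS; (split; [exact: (Dv111 _ f)|]); (split; [exact: (Dv112 _ f)|]); (split; [exact: (Dv113 _ f)|]); (split; [exact: (Dv121 _ f)|]); (split; [exact: (Dv122 _ f)|]); (split; [exact: (Dv123 _ f)|]); (split; [exact: (Dv131 _ f)|]); (split; [exact: (Dv132 _ f)|]); (split; [exact: (Dv133 _ f)|]); (split; [exact: (Dv211 _ f)|]); (split; [exact: (Dv212 _ f)|]); (split; [exact: (Dv213 _ f)|]); (split; [exact: (Dv221 _ f)|]); (split; [exact: (Dv222 _ f)|]); (split; [exact: (Dv223 _ f)|]); (split; [exact: (Dv231 _ f)|]); (split; [exact: (Dv232 _ f)|]); (split; [exact: (Dv233 _ f)|]); (split; [exact: (Dv311 _ f)|]); (split; [exact: (Dv312 _ f)|]); (split; [exact: (Dv313 _ f)|]); (split; [exact: (Dv321 _ f)|]); (split; [exact: (Dv322 _ f)|]); (split; [exact: (Dv323 _ f)|]); (split; [exact: (Dv331 _ f)|]); (split; [exact: (Dv332 _ f)|]); exact: (Dv333 _ f).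
have HG : FspecS (Df g) (cf g o1 o1 o1) (cf g o1 o1 o2) (cf g o1 o1 o3) (cf g o1 o2 o2) (cf g o1 o2 o3) (cf g o1 o3 o3) (cf g o2 o2 o2) (cf g o2 o2 o3) (cf g o2 o3 o3) (cf g o3 o3 o3) by rewrite /FspecS; (split; [exact: (Dv111 _ g)|]); (split; [exact: (Dv112 _ g)|]); (split; [exact: (Dv113 _ g)|]); (split; [exact: (Dv121 _ g)|]); (split; [exact: (Dv122 _ g)|]); (split; [exact: (Dv123 _ g)|]); (split; [exact: (Dv131 _ g)|]); (split; [exact: (Dv132 _ g)|]); (split; [exact: (Dv133 _ g)|]); (split; [exact: (Dv211 _ g)|]); (split; [exact: (Dv212 _ g)|]); (split; [exact: (Dv213 _ g)|]); (split; [exact: (Dv221 _ g)|]); (split; [exact: (Dv222 _ g)|]); (split; [exact: (Dv223 _ g)|]); (split; [exact: (Dv231 _ g)|]); (split; [exact: (Dv232 _ g)|]); (split; [exact: (Dv233 _ g)|]); (split; [exact: (Dv311 _ g)|]); (split; [exact: (Dv312 _ g)|]); (split; [exact: (Dv313 _ g)|]); (split; [exact: (Dv321 _ g)|]); (split; [exact: (Dv322 _ g)|]); (split; [exact: (Dv323 _ g)|]); (split; [exact: (Dv331 _ g)|]); (split; [exact: (Dv332 _ g)|]); exact: (Dv333 _ g).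
have X := @expandS _ (Df f) (Df g) (cf f o1 o1 o1) (cf f o1 o1 o2) (cf f o1 o1 o3) (cf f o1 o2 o2) (cf f o1 o2 o3) (cf f o1 o3 o3) (cf f o2 o2 o2) (cf f o2 o2 o3) (cf f o2 o3 o3) (cf f o3 o3 o3) (cf g o1 o1 o1) (cf g o1 o1 o2) (cf g o1 o1 o3) (cf g o1 o2 o2) (cf g o1 o2 o3) (cf g o1 o3 o3) (cf g o2 o2 o2) (cf g o2 o2 o3) (cf g o2 o3 o3) (cf g o3 o3 o3) (w_of x y z) HF HG.
have E := J3_eval _ f g (w_of x y z).
rewrite H rmorph0 X in E.
exact: (esym E).
Qed.

Lemma lin1 {R : comRingType} {a1 b : R} (c1 : R) : a1 = 0 -> b = c1 * a1 -> b = 0.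
Proof. by move=> -> ->; rewrite mulr0. Qed.
Lemma lin3 {R : comRingType} {a1 a2 a3 b : R} (c1 c2 c3 : R) :
  a1 = 0 -> a2 = 0 -> a3 = 0 -> b = c1 * a1 + c2 * a2 + c3 * a3 -> b = 0.
Proof. by move=> -> -> -> ->; rewrite !mulr0 !addr0. Qed.
Lemma lin6 {R : comRingType} {a1 a2 a3 a4 a5 a6 b : R} (c1 c2 c3 c4 c5 c6 : R) :
  a1 = 0 -> a2 = 0 -> a3 = 0 -> a4 = 0 -> a5 = 0 -> a6 = 0 ->
  b = c1 * a1 + c2 * a2 + c3 * a3 + c4 * a4 + c5 * a5 + c6 * a6 -> b = 0.
Proof. by move=> -> -> -> -> -> -> ->; rewrite !mulr0 !addr0. Qed.

Lemma cancelc {R : numDomainType} (c : nat) {d x : R} : d != 0 -> x * (c.+1%:R * d) = 0 -> x = 0.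
Proof.
move=> nz /eqP; rewrite !mulf_eq0 pnatr_eq0 /= (negbTE nz) !orbF => /eqP //.
Qed.

Lemma alg1 {R : numDomainType} {f111 f112 f113 f122 f123 f133 f222 f223 f233 f333 g111 g112 g113 g122 g123 g133 g222 g223 g233 g333 : R} :
  (forall x y z, PS f111 f112 f113 f122 f123 f133 f222 f223 f233 f333 g111 g112 g113 g122 g123 g133 g222 g223 g233 g333 x y z = 0) -> f333 != 0 ->
  g113 = 0 -> g123 = 0 -> g223 = 0 -> g133 = 0 -> g233 = 0 -> g333 = 0 ->
  g111 = 0 /\ g112 = 0 /\ g122 = 0 /\ g222 = 0.
Proof.
move=> HP nz h113 h123 h223 h133 h233 h333; subst.
have e222 : g222 * (216 * f333) = 0.
  by apply: (lin1 (-1) (HP 1 0 0)); rewrite /PS; ring.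
have e111 : g111 * (216 * f333) = 0.
  by apply: (lin1 1 (HP 0 1 0)); rewrite /PS; ring.
have e122 : g122 * (432 * f333) = 0.
  by apply: (lin3 1 (-1) (-2) (HP 1 1 0) (HP 1 (-1) 0) (HP 0 1 0)); rewrite /PS; ring.
have e112 : g112 * (432 * f333) = 0.
  by apply: (lin3 (-1) (-1) 2 (HP 1 1 0) (HP 1 (-1) 0) (HP 1 0 0)); rewrite /PS; ring.
split; first exact: (cancelc 215 nz e111).
split; first exact: (cancelc 431 nz e112).
split; first exact: (cancelc 431 nz e122).
exact: (cancelc 215 nz e222).
Qed.

Lemma alg2 {R : numDomainType} {f111 f112 f113 f122 f123 f133 f222 f223 f233 f333 g111 g112 g113 g122 g123 g133 g222 g223 g233 g333 : R} :
  (forall x y z, PS f111 f112 f113 f122 f123 f133 f222 f223 f233 f333 g111 g112 g113 g122 g123 g133 g222 g223 g233 g333 x y z = 0) ->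
  4 * f113 * f223 - f123 ^+ 2 != 0 ->
  g113 = 0 -> g123 = 0 -> g223 = 0 -> g333 = 0 ->
  g133 = 0 /\ g233 = 0.
Proof.
move=> HP nz h113 h123 h223 h333; subst.
have e233 : g233 * (144 * (4 * f113 * f223 - f123 ^+ 2)) = 0.
  apply: (lin6 (3 * f333) (3 * f333) (-6 * f333 - 6 * f113 + 2 * f223) (- f123 - f223)
     (f123 - f223) (2 * f123) (HP 1 0 1) (HP 1 0 (-1)) (HP 1 0 0) (HP 1 1 0) (HP 1 (-1) 0) (HP 0 1 0)).
  by rewrite /PS; ring.
have e133 : g133 * (144 * (4 * f113 * f223 - f123 ^+ 2)) = 0.
  apply: (lin6 (f113 + f123) (- f113 + f123) (-2 * f113 + 6 * f223 + 6 * f333) (-2 * f123)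
     (-3 * f333) (-3 * f333) (HP 1 1 0) (HP 1 (-1) 0) (HP 0 1 0) (HP 1 0 0) (HP 0 1 1) (HP 0 1 (-1))).
  by rewrite /PS; ring.
split; first exact: (cancelc 143 nz e133).
exact: (cancelc 143 nz e233).
Qed.

Lemma sum3n (m : 'X_{1..3}) : (\sum_(i < 3) m i)%N = (m o1 + m o2 + m o3)%N.
Proof.
rewrite !big_ord_recr big_ord0 /= add0n.
by congr (m _ + m _ + m _)%N; apply: val_inj.
Qed.

Lemma ord3_cases (l : 'I_3) : l = o1 \/ l = o2 \/ l = o3.
Proof.
case: l => [[|[|[|n]]] Hl].
- by left; apply: val_inj.
- by right; left; apply: val_inj.
- by right; right; apply: val_inj.
- by exfalso; move: Hl; rewrite !ltnS ltn0.
Qed.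

Lemma homog3_zero {R : comRingType} {g : {mpoly R[3]}} : g \is 3.-homog ->
  cf g o1 o1 o1 = 0 -> cf g o1 o1 o2 = 0 -> cf g o1 o1 o3 = 0 -> cf g o1 o2 o2 = 0 ->
  cf g o1 o2 o3 = 0 -> cf g o1 o3 o3 = 0 -> cf g o2 o2 o2 = 0 -> cf g o2 o2 o3 = 0 ->
  cf g o2 o3 o3 = 0 -> cf g o3 o3 o3 = 0 -> g = 0.
Proof.
move=> hg h111 h112 h113 h122 h123 h133 h222 h223 h233 h333.
apply/mpolyP => m; rewrite mcoeff0.
have [/eqP Hd | Hd] := boolP (mdeg m == 3%N); last exact: (dhomog_nemf_coeff hg Hd).
rewrite mdegE sum3n in Hd.
have E : forall i j k : 'I_3,
  m o1 = (U_(i) + U_(j) + U_(k))%MM o1 -> m o2 = (U_(i) + U_(j) + U_(k))%MM o2 ->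
  m o3 = (U_(i) + U_(j) + U_(k))%MM o3 -> m = (U_(i) + U_(j) + U_(k))%MM.
  move=> i j k e1 e2 e3; apply/mnmP => l.
  by case: (ord3_cases l) => [->|[->|->]].
move: (m o1) (m o2) (m o3) E Hd => a b c E Hd.
case: a E Hd => [|[|[|[|a]]]] E Hd; case: b E Hd => [|[|[|[|b]]]] E Hd;
  case: c E Hd => [|[|[|[|c]]]] E Hd; try (exfalso; lia).
- by rewrite (E o3 o3 o3) ?mnmDE ?mnm1E.
- by rewrite (E o2 o3 o3) ?mnmDE ?mnm1E.
- by rewrite (E o2 o2 o3) ?mnmDE ?mnm1E.
- by rewrite (E o2 o2 o2) ?mnmDE ?mnm1E.
- by rewrite (E o1 o3 o3) ?mnmDE ?mnm1E.
- by rewrite (E o1 o2 o3) ?mnmDE ?mnm1E.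
- by rewrite (E o1 o2 o2) ?mnmDE ?mnm1E.
- by rewrite (E o1 o1 o3) ?mnmDE ?mnm1E.
- by rewrite (E o1 o1 o2) ?mnmDE ?mnm1E.
- by rewrite (E o1 o1 o1) ?mnmDE ?mnm1E.
Qed.

Theorem lemma7p5 (R : numClosedFieldType) (f g : {mpoly R[3]}) :
  f \is 3.-homog -> g \is 3.-homog ->
  J3 (lift_x f) (lift_x g) (u_x R ^+ 3) = 0 ->
  (cf f o3 o3 o3 != 0 ->
     (g = 0 <-> (cf g o1 o1 o3 = 0 /\ cf g o1 o2 o3 = 0 /\ cf g o2 o2 o3 = 0 /\
                    cf g o1 o3 o3 = 0 /\ cf g o2 o3 o3 = 0 /\ cf g o3 o3 o3 = 0)))
  /\
  (cf f o3 o3 o3 != 0 ->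
   4 * cf f o1 o1 o3 * cf f o2 o2 o3 - cf f o1 o2 o3 ^+ 2 != 0 ->
     (g = 0 <-> (cf g o1 o1 o3 = 0 /\ cf g o1 o2 o3 = 0 /\
                    cf g o2 o2 o3 = 0 /\ cf g o3 o3 o3 = 0))).
Proof.
move=> hf hg H.
have HP := Pw H.
split.
- move=> nz; split => [->|[h113 [h123 [h223 [h133 [h233 h333]]]]]].
    by rewrite /cf !mcoeff0.
  have [h111 [h112 [h122 h222]]] := alg1 HP nz h113 h123 h223 h133 h233 h333.
  exact: (homog3_zero hg h111 h112 h113 h122 h123 h133 h222 h223 h233 h333).
- move=> nz nzD; split => [->|[h113 [h123 [h223 h333]]]].
    by rewrite /cf !mcoeff0.
  have [h133 h233] := alg2 HP nzD h113 h123 h223 h333.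
  have [h111 [h112 [h122 h222]]] := alg1 HP nz h113 h123 h223 h133 h233 h333.
  exact: (homog3_zero hg h111 h112 h113 h122 h123 h133 h222 h223 h233 h333).
Qed.
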